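(* Let $U\subseteq L_{\mathrm{up}}$ be a set of up-links such that the sets $P_u$, $u\in U$, are pairwise disjoint, let $(C,A)$ be a (weakly) connected component of the dependency graph of $U$ (which is an arborescence), and let $k\in\mathbb{Z}_{\ge0}$. If for every directed path in $(C,A)$ with arc set $H\subseteq A$ we have $|\{u\in U\colon H\cap A_u\neq\emptyset\}|\le k$, then $C$ is $(k+1)$-thin.
   Context: Let $(G=(V,E),L,w)$ be a WTAP instance (spanning tree $G$, links $L\subseteq\binom V2$, weights $w>0$) with a fixed root $r\in V$, and let $F\subseteq L$ be a WTAP solution, i.e. $\bigcup_{\ell\in F}P_\ell=E$, where $P_\ell$ is the edge set of the tree path between the endpoints of $\ell$ and $V_\ell$ its vertex set. A link set $X$ is $k$-thin if every vertex of $V$ lies in $V_\ell$ for at most $k$ links $\ell\in X$. Ancestors of $v$ are the vertices on the $r$-$v$ path in $G$ (including $r$ and $v$); descendants are defined reciprocally. $\mathrm{apex}(\ell)$ is the vertex of $V_\ell$ closest to $r$. An up-link is a link $\{t,b\}$ with $t$ an ancestor of $b$; $L_{\mathrm{up}}$ is the set of up-links. For $v\in V$ let $B_v=\{\ell\in F\colon\mathrm{apex}(\ell)\text{ is a descendant of }v\}$. For an up-link $u=\{t,b\}$ with $t$ an ancestor of $b$, let $v_u$ be the ancestor of $t$ farthest from $r$ such that $P_u\subseteq\bigcup_{\ell\in B_{v_u}}P_\ell$, and fix $F_u\subseteq B_{v_u}$ inclusion-wise minimal with $P_u\subseteq\bigcup_{\ell\in F_u}P_\ell$. For $\ell\in F_u$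 let $P_{u,\ell}=P_u\setminus\bigcup_{\bar\ell\in F_u\setminus\{\ell\}}P_{\bar\ell}$; these sets are nonempty, pairwise disjoint, and each is the edge set of a path. Define $\ell_1\prec_u\ell_2$ iff the edges of $P_{u,\ell_1}$ appear before those of $P_{u,\ell_2}$ on the $t$-$b$ path in $G$. If $\ell_1\prec_u\cdots\prec_u\ell_q$ are the links of $F_u$, let $A_u=\{(\ell_i,\ell_{i+1})\colon i=1,\dots,q-1\}$. The dependency graph of $U\subseteq L_{\mathrm{up}}$ is the directed graph with vertex set $F$ whose arc set is the disjoint union of the $A_u$, $u\in U$. When the $P_u$, $u\in U$, are pairwise disjoint, this graph is a branching (no directed cycles, in-degrees at most one), so each weakly connected component is an arborescence. *)

(* Defs.v *)
From mathcomp Require Import all_boot all_order all_algebra.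
Set Implicit Arguments. Unset Strict Implicit. Unset Printing Implicit Defensive.

(* The rooted spanning tree G is given by a parent function [par] with root
   [r] (see the tree hypotheses in the theorem).  The edge {x, par x} of G is
   represented by its child endpoint x (x <> r).  A link is a 2-element
   vertex set {set V}. *)
Section WTAP.
Variables (V : finType) (r : V) (par : V -> V).

Definition anc (u v : V) : bool :=
  [exists n : 'I_#|V|.+1, iter n par v == u].

(* number of vertices on the r-x path (= distance from r, plus one) *)
Definition depth (x : V) : nat := #|[set y | anc y x]|.

(* vertex set V_l of the tree path between the endpoints of l *)
Definition Vl (l : {set V}) : {set V} :=
  [set x | [exists a in l, anc x a] &&
           [forall y, [forall a in l, anc y a] ==> anc y x]].

(* edge set P_l of the tree path (edges as child vertices) *)
Definition Pl (l : {set V}) : {set V} :=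
  [set x | [&& x != r, x \in Vl l & par x \in Vl l]].

Definition is_apex (l : {set V}) (x : V) : bool :=
  (x \in Vl l) && [forall y in Vl l, depth x <= depth y].

Definition is_uplink (l : {set V}) : bool :=
  (#|l| == 2) && [exists t in l, exists b in l, (t != b) && anc t b].

Definition top (u : {set V}) (t : V) : bool :=
  (t \in u) && [forall b in u, anc t b].

Variable F : {set {set V}}.

Definition B (v : V) : {set {set V}} :=
  [set l in F | [exists x, is_apex l x && anc v x]].

Definition covers (P : {set V}) (X : {set {set V}}) : bool :=
  P \subset \bigcup_(l in X) Pl l.

Definition is_vu (u : {set V}) (v : V) : bool :=
  [exists t, [&& top u t, anc v t, covers (Pl u) (B v) &
     [forall w, (anc w t && covers (Pl u) (B w)) ==> (depth w <= depth v)]]].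

Definition valid_Fu (u : {set V}) (Fu : {set {set V}}) : bool :=
  [exists v, is_vu u v &&
     minset (fun X : {set {set V}} => (X \subset B v) && covers (Pl u) X) Fu].

Variable Fu : {set V} -> {set {set V}}.

Definition Pul (u l : {set V}) : {set V} :=
  Pl u :\: \bigcup_(l' in Fu u :\ l) Pl l'.

(* l1 <_u l2: edges of P_{u,l1} appear before those of P_{u,l2} on the t-b path *)
Definition precu (u l1 l2 : {set V}) : bool :=
  [forall e in Pul u l1, forall e' in Pul u l2, depth e < depth e'].

(* arcs of the dependency graph: ((u, tail), head), an arc of A_u *)
Definition arcT := ({set V} * {set V} * {set V})%type.

Definition in_Au (u : {set V}) (a : arcT) : bool :=
  [&& a.1.1 == u, a.1.2 \in Fu u, a.2 \in Fu u, precu u a.1.2 a.2 &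
      [forall l3 in Fu u, ~~ (precu u a.1.2 l3 && precu u l3 a.2)]].

Variable U : {set {set V}}.

Definition is_arc (a : arcT) : bool := (a.1.1 \in U) && in_Au a.1.1 a.

Definition adj (l1 l2 : {set V}) : bool :=
  [exists a : arcT, is_arc a &&
     (((a.1.2 == l1) && (a.2 == l2)) || ((a.1.2 == l2) && (a.2 == l1)))].

Definition is_wcomp (C : {set {set V}}) : bool :=
  [exists l0 in F, C == [set l | connect adj l0 l]].

Definition path_vertices (s : seq arcT) : seq {set V} :=
  if s is a :: _ then a.1.2 :: map snd s else [::].

Definition dpath_in (C : {set {set V}}) (s : seq arcT) : bool :=
  [&& all (fun a => [&& is_arc a, a.1.2 \in C & a.2 \in C]) s,
      sorted (fun a b : arcT => a.2 == b.1.2) s &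
      uniq (path_vertices s)].

Definition thin (k : nat) (X : {set {set V}}) : bool :=
  [forall x : V, #|[set l in X | x \in Vl l]| <= k].

End WTAP.

(* Main.v *)
Require Import Defs.
From mathcomp Require Import all_boot all_order all_algebra.
From mathcomp Require Import zify.

Section Tree.
Variables (V : finType) (r : V) (par : V -> V).
Hypothesis hpr : par r = r.
Hypothesis hreach : forall v, exists n, iter n par v = r.

Lemma iter_r n : iter n par r = r.
Proof. by elim: n => //= n ->. Qed.

Lemma iter_ge v i n : iter i par v = r -> i <= n -> iter n par v = r.
Proof.
move=> hi hin; rewrite -(subnK hin) iterD hi; exact: iter_r.
Qed.

Lemma cyc w p : iter p par w = w -> 0 < p -> w = r.
Proof.
move=> hp p0.
have hk : forall k, iter (k * p) par w = w.
  by elim=> [|k IH] //; rewrite mulSn iterD IH hp.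
have [n hn] := hreach w.
rewrite -(hk n); apply: (@iter_ge w n) => //; exact: leq_pmulr.
Qed.

Lemma reach_bound v : exists2 i, i <= #|V| & iter i par v = r.
Proof.
pose f := fun i : 'I_#|V|.+1 => iter i par v.
have : ~~ injectiveb f.
  apply/negP => /injectiveP finj.
  by have := leq_card f finj; rewrite card_ord ltnn.
case/injectivePn => i [j] hij hf.
wlog lij : i j hij hf / i < j.
  move=> W; case: (ltngtP i j) => h.
  - exact: (W i j).
  - by apply: (W j i) => //; rewrite eq_sym.
  - by move: hij; rewrite (val_inj h) eqxx.
exists i; first by rewrite -ltnS.
apply: (@cyc _ (j - i)); last by rewrite subn_gt0.
by by rewrite -iterD subnK ?(ltnW lij) //; rewrite /f in hf; rewrite -hf.
Qed.

Lemma ancP u v : reflect (exists n, iter n par v = u) (anc par u v).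
Proof.
apply: (iffP existsP) => [[n /eqP h]|[n h]]; first by exists n.
have [i hi hir] := reach_bound v.
case: (leqP n i) => hni.
  have hn : n < #|V|.+1 by rewrite ltnS (leq_trans hni hi).
  by exists (Ordinal hn); apply/eqP.
have hn : i < #|V|.+1 by rewrite ltnS.
exists (Ordinal hn); apply/eqP => /=.
by rewrite hir -h (@iter_ge v i n hir (ltnW hni)).
Qed.

Local Notation anc := (anc par).
Local Notation depth := (depth par).

Lemma anc_refl u : anc u u.
Proof. by apply/ancP; exists 0. Qed.

Lemma anc_trans {u v w} : anc u v -> anc v w -> anc u w.
Proof.
move=> /ancP [n hn] /ancP [m hm]; apply/ancP; exists (n + m).
by rewrite iterD hm hn.
Qed.

Lemma anc_r v : anc r v.
Proof. by apply/ancP; apply: hreach. Qed.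

Lemma anc_par v : anc (par v) v.
Proof. by apply/ancP; exists 1. Qed.

Lemma par_fix v : par v = v -> v = r.
Proof. by move=> h; apply: (@cyc v 1). Qed.

Lemma anc_antisym {u v} : anc u v -> anc v u -> u = v.
Proof.
move=> /ancP [n hn] /ancP [m hm].
case: n hn => [|n] hn; first by [].
have hv : iter (m + n.+1) par v = v by rewrite iterD hn.
have vr := @cyc v _ hv (ltn_addl m (ltn0Sn n)).
by rewrite -hn vr iter_r.
Qed.

Lemma anc_total {u w x} : anc u x -> anc w x -> anc u w || anc w u.
Proof.
move=> /ancP [n hn] /ancP [m hm].
case: (leqP n m) => h.
  apply/orP; right; apply/ancP; exists (m - n).
  by rewrite -hm -hn -iterD subnK.
apply/orP; left; apply/ancP; exists (n - m).
by rewrite -hm -hn -iterD subnK // ltnW.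
Qed.

Lemma depth_le {u v} : anc u v -> depth u <= depth v.
Proof.
move=> huv; apply: subset_leq_card; apply/subsetP => y.
by rewrite !inE => hy; apply: anc_trans hy huv.
Qed.

Lemma depth_lt {u v} : anc u v -> u != v -> depth u < depth v.
Proof.
move=> huv hne; apply: proper_card; apply/properP; split.
  apply/subsetP => y; rewrite !inE => hy; exact: anc_trans hy huv.
exists v; rewrite !inE ?anc_refl //.
apply/negP => hvu; by rewrite (anc_antisym huv hvu) eqxx in hne.
Qed.

Lemma anc_depth_eq {u v} : anc u v -> depth v <= depth u -> u = v.
Proof.
move=> huv hd; apply/eqP; apply/negPn/negP => hne.
by have := depth_lt huv hne; rewrite ltnNge hd.
Qed.

Lemma anc_par_step {u v} : anc u v -> u != v -> anc u (par v).
Proof.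
move=> /ancP [[|n] hn] hne; first by rewrite -hn eqxx in hne.
by apply/ancP; exists n; rewrite -iterSr.
Qed.


Definition CA (l : {set V}) : {set V} := [set y | [forall a in l, anc y a]].
Definition apex (l : {set V}) : V := [arg max_(y > r in CA l) depth y].

Lemma CA_r l : r \in CA l.
Proof. by rewrite inE; apply/forallP => a; apply/implyP => _; apply: anc_r. Qed.

Lemma apex_spec l : apex l \in CA l /\ forall y, y \in CA l -> depth y <= depth (apex l).
Proof.
rewrite /apex; case: arg_maxnP; first exact: CA_r.
by move=> i hi hmax; split.
Qed.

Lemma CA_anc {l : {set V}} {a y : V} : a \in l -> y \in CA l -> anc y (apex l).
Proof.
move=> ha hy; have [hA hmax] := apex_spec l.
have hAa : anc (apex l) a by move: hA; rewrite inE => /forallP /(_ a) /implyP; apply.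
have hya : anc y a by move: hy; rewrite inE => /forallP /(_ a) /implyP; apply.
case/orP: (anc_total hya hAa) => // hAy.
by rewrite (anc_depth_eq hAy (hmax _ hy)) anc_refl.
Qed.

Lemma VlE l x : (x \in Vl par l) = [exists a in l, anc x a] && anc (apex l) x.
Proof.
rewrite inE; case E: [exists a in l, anc x a] => //=.
case/existsP: E => a /andP [ha _].
apply/forallP/idP => [h|h y].
  have [hA _] := apex_spec l; rewrite inE in hA.
  by have := h (apex l) => /implyP; apply.
apply/implyP => hy; apply: anc_trans h; apply: (CA_anc ha); by rewrite inE.
Qed.

Lemma Vl_apex {l : {set V}} {x : V} : x \in Vl par l -> anc (apex l) x.
Proof. by rewrite VlE => /andP []. Qed.

Lemma Vl_ex {l : {set V}} {x : V} : x \in Vl par l -> exists2 a, a \in l & anc x a.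
Proof. by rewrite VlE => /andP [/existsP [a /andP [ha hx]] _]; exists a. Qed.

Lemma apex_in {l : {set V}} {a : V} : a \in l -> apex l \in Vl par l.
Proof.
move=> ha; rewrite VlE anc_refl andbT; apply/existsP; exists a; rewrite ha /=.
by have [hA _] := apex_spec l; move: hA; rewrite inE => /forallP /(_ a) /implyP; apply.
Qed.

Lemma Vl_conv {l : {set V}} {y z : V} : anc (apex l) y -> anc y z -> z \in Vl par l -> y \in Vl par l.
Proof.
move=> hAy hyz; rewrite !VlE => /andP [/existsP [a /andP [ha hza]] _].
rewrite hAy andbT; apply/existsP; exists a; rewrite ha /=; exact: anc_trans hyz hza.
Qed.

Lemma PlE l x : (x \in Pl r par l) = (x \in Vl par l) && (x != apex l).
Proof.
rewrite inE; apply/idP/idP.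
  case/and3P => hxr hx hpx; rewrite hx /=; apply/eqP => hxa.
  have h1 : anc x (par x) by rewrite {1}hxa; exact: Vl_apex hpx.
  have := anc_antisym h1 (anc_par x) => hpx'.
  by move: hxr; rewrite (par_fix x (esym hpx')) eqxx.
case/andP => hx hxa.
have hAx := Vl_apex hx.
have hxr : x != r.
  apply/eqP => hxr; move: hxa hAx; rewrite hxr => hxa hAr.
  by rewrite (anc_antisym (anc_r (apex l)) hAr) eqxx in hxa.
rewrite hxr hx /=.
apply: (Vl_conv _ (anc_par x) hx).
by apply: anc_par_step => //; rewrite eq_sym.
Qed.

Lemma Pl_Vl {l : {set V}} {x : V} : x \in Pl r par l -> x \in Vl par l.
Proof. by rewrite PlE => /andP []. Qed.

Lemma Pl_apex {l : {set V}} {x : V} : x \in Pl r par l -> anc (apex l) x /\ apex l != x.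
Proof. by rewrite PlE => /andP [hx hne]; split; [exact: Vl_apex | rewrite eq_sym]. Qed.

Lemma Pl_intro {l : {set V}} {x : V} : x \in Vl par l -> apex l != x -> x \in Pl r par l.
Proof. by move=> hx hne; rewrite PlE hx eq_sym. Qed.

Lemma is_apexE {l : {set V}} {x a : V} : a \in l -> is_apex par l x = (x == apex l).
Proof.
move=> ha; rewrite /is_apex; apply/idP/eqP.
  case/andP => hx /forallP hmin.
  have := hmin (apex l); rewrite (apex_in ha) /= => hd.
  exact: esym (anc_depth_eq (Vl_apex hx) hd).
move=> ->; rewrite (apex_in ha) /=; apply/forallP => y; apply/implyP => hy.
exact: depth_le (Vl_apex hy).
Qed.

Lemma inB (F : {set {set V}}) (v : V) (l : {set V}) (a : V) : a \in l -> (l \in B par F v) = (l \in F) && anc v (apex l).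
Proof.
move=> ha; rewrite inE; congr (_ && _); apply/existsP/idP => [[x /andP [hx hv]]|hv].
  by move: hx; rewrite (is_apexE ha) => /eqP <-.
by exists (apex l); rewrite (is_apexE ha) eqxx.
Qed.


Lemma uplink_spec u : is_uplink par u ->
  exists t b, [/\ t != b, anc t b, t \in u, b \in u & forall z, z \in u -> z = t \/ z = b].
Proof.
case/andP => /eqP hc /existsP [t /andP [ht /existsP [b /andP [hb /andP [htb hanc]]]]].
exists t, b; split => // z hz.
have hsub : [set t; b] \subset u by apply/subsetP => y /set2P [] ->.
have : [set t; b] == u by rewrite eqEcard hsub cards2 htb hc.
by move/eqP => E; move: hz; rewrite -E => /set2P.
Qed.

Section UL.
Variables (u : {set V}) (t b : V).
Hypotheses (htb : t != b) (hanc : anc t b) (ht : t \in u) (hb : b \in u)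
  (hz : forall z, z \in u -> z = t \/ z = b).

Lemma ul_apex : apex u = t.
Proof.
have htC : t \in CA u.
  rewrite inE; apply/forallP => y; apply/implyP => /hz [] ->; [exact: anc_refl | exact: hanc].
have h1 := CA_anc ht htC.
have [hA _] := apex_spec u.
have h2 : anc (apex u) t by move: hA; rewrite inE => /forallP /(_ t) /implyP; apply.
exact: anc_antisym h2 h1.
Qed.

Lemma ul_Pl y : (y \in Pl r par u) = [&& anc t y, anc y b & y != t].
Proof.
rewrite PlE VlE ul_apex; apply/idP/idP.
  case/andP => /andP [/existsP [z /andP [hzu hyz]] hty] hne; rewrite hty hne andbT /=.
  case: (hz z hzu) => e; subst z => //.
  by rewrite (anc_antisym hyz hty) eqxx in hne.
case/and3P => hty hyb hne; rewrite hty hne !andbT; apply/existsP; exists b; by rewrite hb hyb.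
Qed.

Lemma ul_top t' : top par u t' -> t' = t.
Proof.
case/andP => ht' /forallP hall.
case: (hz t' ht') => // e; subst t'.
have := hall t; rewrite ht /= => hbt.
by move: htb; rewrite (anc_antisym hanc hbt) eqxx.
Qed.

End UL.


Variables (F : {set {set V}}) (Fu : {set V} -> {set {set V}}).
Hypothesis hF2 : forall l, l \in F -> exists a, a \in l.

Lemma covers_sub {P : {set V}} {X Y : {set {set V}}} : X \subset Y -> covers r par P X -> covers r par P Y.
Proof.
move=> hXY /subsetP hc; apply/subsetP => e /hc /bigcupP [l hl he].
by apply/bigcupP; exists l => //; apply: (subsetP hXY).
Qed.

Lemma coversP {P : {set V}} {X : {set {set V}}} {e : V} : covers r par P X -> e \in P -> exists2 l, l \in X & e \in Pl r par l.
Proof. by move=> /subsetP h /h /bigcupP. Qed.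

Section FuS.
Variables (u : {set V}) (v t b : V).
Hypotheses (htb : t != b) (hanc : anc t b)
  (hPu : forall y, (y \in Pl r par u) = [&& anc t y, anc y b & y != t])
  (hsubB : Fu u \subset B par F v) (hcov : covers r par (Pl r par u) (Fu u))
  (hmin : forall X : {set {set V}}, X \subset Fu u -> covers r par (Pl r par u) X -> X = Fu u)
  (hvt : anc v t)
  (hmax : forall w : V, anc w t -> covers r par (Pl r par u) (B par F w) -> depth w <= depth v).

Local Notation Pul := (Pul r par Fu u).
Local Notation prec := (precu r par Fu u).
Local Notation Pl := (Pl r par).

Lemma Pu_t {y : V} : y \in Pl u -> anc t y /\ t != y.
Proof. by rewrite hPu => /and3P [h1 _ h3]; split => //; rewrite eq_sym. Qed.

Lemma Pu_b {y : V} : y \in Pl u -> anc y b.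
Proof. by rewrite hPu => /and3P []. Qed.

Lemma Pul_spec {l : {set V}} {e : V} : l \in Fu u -> e \in Pul l ->
  [/\ e \in Pl u, e \in Pl l & forall l', l' \in Fu u -> l' != l -> e \notin Pl l'].
Proof.
move=> hl; rewrite /Defs.Pul inE => /andP [hn he].
have hno : forall l', l' \in Fu u -> l' != l -> e \notin Pl l'.
  move=> l' hl' hne; apply/negP => hel'; move/negP: hn; apply.
  by apply/bigcupP; exists l' => //; rewrite !inE hne.
split => //.
have [l'' hl'' hel''] := coversP hcov he.
case: (eqVneq l'' l) => [<- //|hne].
by move: (hno _ hl'' hne); rewrite hel''.
Qed.

Lemma Pul_ex {l : {set V}} : l \in Fu u -> exists e, e \in Pul l.
Proof.
move=> hl; case: (eqVneq (Pul l) set0) => [h0|/set0Pn //].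
have hc : covers r par (Pl u) (Fu u :\ l).
  apply/subsetP => e he; apply/negPn/negP => hn.
  have : e \in Pul l by rewrite /Defs.Pul inE he andbT.
  by rewrite h0 inE.
have := hmin _ (subsetDl _ _) hc => /setP /(_ l).
by rewrite !inE eqxx hl.
Qed.

Lemma Fu_F {l : {set V}} : l \in Fu u -> l \in F /\ anc v (apex l).
Proof.
move=> hl; have hB := subsetP hsubB _ hl.
have hF : l \in F by move: hB; rewrite inE => /andP [].
have [a ha] := hF2 _ hF.
by move: hB; rewrite (inB _ _ _ _ ha) hF.
Qed.

Lemma apex_b {l : {set V}} : l \in Fu u -> anc (apex l) b.
Proof.
move=> hl; have [e he] := Pul_ex hl; have [h1 h2 _] := Pul_spec hl he.
exact: anc_trans (Pl_apex h2).1 (Pu_b h1).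
Qed.

Lemma prec_of_anc {c c' : {set V}} : c \in Fu u -> c' \in Fu u -> c != c' ->
  anc (apex c) (apex c') -> prec c c'.
Proof.
move=> hc hc' hne hA; apply/forallP => e; apply/implyP => he.
apply/forallP => e'; apply/implyP => he'.
have [heu hec _] := Pul_spec hc he.
have [heu' hec' hno'] := Pul_spec hc' he'.
case/orP: (anc_total (Pu_b heu) (Pu_b heu')) => hee'.
  case: (eqVneq e e') => [E|hne'].
    subst e'; have := hno' _ hc hne; by rewrite hec.
  exact: depth_lt hee' hne'.
exfalso.
have [hA' hne2] := Pl_apex hec'.
have hAe' : anc (apex c) e' := anc_trans hA hA'.
have hv : e' \in Vl par c := Vl_conv hAe' hee' (Pl_Vl hec).
have hn3 : apex c != e'.
  apply/eqP => E; have h' : anc (apex c') (apex c) by rewrite E.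
  by move: hne2; rewrite -E (anc_antisym hA h') eqxx.
by have := hno' _ hc hne; rewrite (Pl_intro hv hn3).
Qed.


Lemma prec_irr {c : {set V}} : c \in Fu u -> ~~ prec c c.
Proof.
move=> hc; have [e he] := Pul_ex hc; apply/negP => /forallP /(_ e).
by rewrite he => /forallP /(_ e); rewrite he ltnn.
Qed.

Lemma prec_lt {c c' : {set V}} {e e' : V} : prec c c' -> e \in Pul c -> e' \in Pul c' ->
  depth e < depth e'.
Proof. by move=> hp he he'; move: hp => /forallP /(_ e) /implyP /(_ he) /forallP /(_ e') /implyP; apply. Qed.

Lemma prec_asym {c c' : {set V}} : c \in Fu u -> c' \in Fu u -> prec c c' -> prec c' c -> False.
Proof.
move=> hc hc' h1 h2; have [e he] := Pul_ex hc; have [e' he'] := Pul_ex hc'.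
have := prec_lt h1 he he'; have := prec_lt h2 he' he => a1 a2.
by have := ltn_trans a1 a2; rewrite ltnn.
Qed.

Lemma prec_trans {a c d : {set V}} : c \in Fu u -> prec a c -> prec c d -> prec a d.
Proof.
move=> hc h1 h2; have [e he] := Pul_ex hc.
apply/forallP => x; apply/implyP => hx; apply/forallP => y; apply/implyP => hy.
exact: ltn_trans (prec_lt h1 hx he) (prec_lt h2 he hy).
Qed.

Lemma prec_neq {c c' : {set V}} : c \in Fu u -> prec c c' -> c != c'.
Proof. by move=> hc h; apply/eqP => E; subst c'; move: (prec_irr hc); rewrite h. Qed.

Lemma apex_cmp {c c' : {set V}} : c \in Fu u -> c' \in Fu u ->
  anc (apex c) (apex c') || anc (apex c') (apex c).
Proof. by move=> hc hc'; exact: anc_total (apex_b hc) (apex_b hc'). Qed.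

Lemma apex_inj {c c' : {set V}} : c \in Fu u -> c' \in Fu u -> apex c = apex c' -> c = c'.
Proof.
move=> hc hc' E; apply/eqP/negPn/negP => hne.
have h1 : prec c c' by apply: prec_of_anc hc hc' hne _; rewrite E anc_refl.
have h2 : prec c' c by apply: prec_of_anc hc' hc _ _; [rewrite eq_sym | rewrite E anc_refl].
exact: prec_asym hc hc' h1 h2.
Qed.

Lemma prec_total {c c' : {set V}} : c \in Fu u -> c' \in Fu u -> c != c' -> prec c c' \/ prec c' c.
Proof.
move=> hc hc' hne; case/orP: (apex_cmp hc hc') => h.
  by left; exact: prec_of_anc hc hc' hne h.
by right; apply: prec_of_anc hc' hc _ h; rewrite eq_sym.
Qed.

Lemma prec_apex {c c' : {set V}} : c \in Fu u -> c' \in Fu u -> prec c c' ->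
  anc (apex c) (apex c') /\ apex c != apex c'.
Proof.
move=> hc hc' hp; have hne := prec_neq hc hp.
have hA : apex c != apex c' by apply/eqP => E; move: hne; rewrite (apex_inj hc hc' E) eqxx.
split => //; case/orP: (apex_cmp hc hc') => // h.
exfalso; apply: (prec_asym hc hc' hp); apply: prec_of_anc hc' hc _ h; by rewrite eq_sym.
Qed.


Lemma top_unique {c c' : {set V}} : c \in Fu u -> c' \in Fu u ->
  anc (apex c) t -> anc (apex c') t -> c = c'.
Proof.
move=> hc hc' h1 h2; apply/eqP/negPn/negP => hne.
have [e he] := Pul_ex hc; have [e' he'] := Pul_ex hc'.
have [heu hec hno] := Pul_spec hc he.
have [heu' hec' hno'] := Pul_spec hc' he'.
have key : forall (c1 c2 : {set V}) (e1 e2 : V), c1 != c2 -> anc (apex c2) t ->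
   e1 \in Pl u -> e2 \in Pl c2 -> anc e1 e2 -> e1 \in Pl c2.
  move=> c1 c2 e1 e2 _ hA he1 he2 h12.
  have [hte1 hne1] := Pu_t he1.
  apply: Pl_intro; first exact: Vl_conv (anc_trans hA hte1) h12 (Pl_Vl he2).
  apply/eqP => E; rewrite -E in hte1.
  by move: hne1; rewrite -E (anc_antisym hA hte1) eqxx.
case/orP: (anc_total (Pu_b heu) (Pu_b heu')) => h.
  have hne' : c' != c by rewrite eq_sym.
  by have := hno c' hc' hne'; rewrite (key c c' e e' hne h2 heu hec' h).
have hne' : c' != c by rewrite eq_sym.
by have := hno' c hc hne; rewrite (key c' c e' e hne' h1 heu' hec h).
Qed.

Lemma no_skip {l m c : {set V}} : l \in Fu u -> m \in Fu u -> c \in Fu u ->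
  prec l m -> prec m c -> apex c \in Pl u -> apex c \in Pl l -> False.
Proof.
move=> hl hm hc p1 p2 hAu hAl.
have [el hel] := Pul_ex hl; have [em hem] := Pul_ex hm; have [ec hec] := Pul_ex hc.
have [elu ell _] := Pul_spec hl hel.
have [emu emm hnom] := Pul_spec hm hem.
have [ecu ecc _] := Pul_spec hc hec.
have d1 := prec_lt p1 hel hem; have d2 := prec_lt p2 hem hec.
have hml : m != l by rewrite eq_sym; exact: prec_neq hl p1.
have hmc : m != c by exact: prec_neq hm p2.
have ltanc : forall x y : V, anc x b -> anc y b -> depth x < depth y -> anc x y.
  move=> x y hx hy hd; case/orP: (anc_total hx hy) => // h.
  by have := depth_le h; rewrite leqNgt hd.
case/orP: (anc_total (Pu_b emu) (Pu_b hAu)) => h.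
  have hle := ltanc _ _ (Pu_b elu) (Pu_b emu) d1.
  have [hAl1 hAl2] := Pl_apex ell.
  have hv : em \in Vl par l := Vl_conv (anc_trans hAl1 hle) h (Pl_Vl hAl).
  have hn : apex l != em.
    apply/eqP => E; rewrite -E in hle.
    by move: hAl2; rewrite (anc_antisym hAl1 hle) eqxx.
  have hlm : l != m by rewrite eq_sym.
  by have := hnom l hl hlm; rewrite (Pl_intro hv hn).
have hmc' := ltanc _ _ (Pu_b emu) (Pu_b ecu) d2.
have hv : em \in Vl par c := Vl_conv h hmc' (Pl_Vl ecc).
have hn : apex c != em.
  apply/eqP => E; have hlm : l != m by rewrite eq_sym.
  by have := hnom l hl hlm; rewrite -E hAl.
have hcm : c != m by rewrite eq_sym.
by have := hnom c hc hcm; rewrite (Pl_intro hv hn).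
Qed.


Lemma notPu_t {y : V} : anc y b -> y \notin Pl u -> anc y t.
Proof.
move=> hyb hn; case/orP: (anc_total hyb hanc) => // h.
case: (eqVneq y t) => [->|hne]; first exact: anc_refl.
by move: hn; rewrite hPu h hyb hne.
Qed.

Lemma cover_after {c l' : {set V}} {e : V} : c \in Fu u -> l' \in Fu u -> apex c \in Pl u ->
  anc (apex l') t -> e \in Pl l' -> e \in Pl u -> anc (apex c) e -> apex c != e -> e \in Pl c.
Proof.
move=> hc hl' hAc hl't hel' heu hce hne.
have [f hf] := Pul_ex hc; have [fu fc hno] := Pul_spec hc hf.
have hcl : l' != c.
  apply/eqP => E; subst l'; have [h1 h2] := Pu_t hAc.
  by move: h2; rewrite (anc_antisym hl't h1) eqxx.
case/orP: (anc_total (Pu_b fu) (Pu_b heu)) => h.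
  have [htf hntf] := Pu_t fu.
  have hv : f \in Vl par l' := Vl_conv (anc_trans hl't htf) h (Pl_Vl hel').
  have hn : apex l' != f.
    apply/eqP => E; rewrite -E in htf.
    by move: hntf; rewrite -E (anc_antisym hl't htf) eqxx.
  by have := hno l' hl' hcl; rewrite (Pl_intro hv hn).
exact: Pl_intro (Vl_conv hce h (Pl_Vl fc)) hne.
Qed.

Lemma arc_head {l l' : {set V}} : l \in Fu u -> l' \in Fu u -> prec l l' ->
  (forall l3, l3 \in Fu u -> ~~ (prec l l3 && prec l3 l')) ->
  apex l' \in Pl u /\ apex l' \in Pl l.
Proof.
move=> hl hl' p hnb.
have hA'u : apex l' \in Pl u.
  apply/negPn/negP => hn; have h't := notPu_t (apex_b hl') hn.
  have [e he] := Pul_ex hl; have [e' he'] := Pul_ex hl'.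
  have [eu el hno] := Pul_spec hl he; have [eu' el' _] := Pul_spec hl' he'.
  have d := prec_lt p he he'.
  have hee' : anc e e'.
    case/orP: (anc_total (Pu_b eu) (Pu_b eu')) => // h.
    by have := depth_le h; rewrite leqNgt d.
  have [hte hnte] := Pu_t eu.
  have hv : e \in Vl par l' := Vl_conv (anc_trans h't hte) hee' (Pl_Vl el').
  have hn2 : apex l' != e.
    apply/eqP => E; rewrite -E in hte.
    by move: hnte; rewrite -E (anc_antisym h't hte) eqxx.
  have hne : l' != l by rewrite eq_sym; exact: prec_neq hl p.
  by have := hno l' hl' hne; rewrite (Pl_intro hv hn2).
split => //.
have [m hm hAm] := coversP hcov hA'u.
case: (eqVneq m l) => [<- //|hml].
exfalso.
have [hmA hmA2] := Pl_apex hAm.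
have hml' : m != l'.
  by apply/eqP => E; move: hmA2; rewrite E eqxx.
have p1 : prec m l' := prec_of_anc hm hl' hml' hmA.
case: (prec_total hm hl hml) => p2.
  exact: no_skip hm hl hl' p2 p hA'u hAm.
by have := hnb m hm; rewrite p2 p1.
Qed.

Lemma vu_contra {lam c g : {set V}} : lam \in Fu u -> c \in Fu u -> apex c \in Pl u ->
  g \in F -> anc (apex lam) (apex g) -> apex lam != apex g -> anc (apex g) t ->
  (forall y, y \in Pl u -> anc y (apex c) -> y \in Pl g) -> False.
Proof.
move=> hlam hc hAc hg hlg hlgn hgt hcovg.
pose X := g |: [set l in Fu u | apex l \in Pl u].
have memX : forall l, l \in Fu u -> apex l \in Pl u -> l \in X.
  by move=> l h1 h2; rewrite /X in_setU1; apply/orP; right; rewrite in_set h1 h2.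
have hX : covers r par (Pl u) X.
  apply/subsetP => e heu; apply/bigcupP.
  case: (boolP (anc e (apex c))) => h.
    by exists g; [rewrite /X in_setU1 eqxx | exact: hcovg].
  have h' : anc (apex c) e by case/orP: (anc_total (Pu_b heu) (Pu_b hAc)) => // h2; rewrite h2 in h.
  have hne : apex c != e by apply/eqP => E; rewrite E anc_refl in h.
  have [l hl hel] := coversP hcov heu.
  case E: (apex l \in Pl u); first by exists l => //; exact: memX.
  have hlt := notPu_t (apex_b hl) (negbT E).
  exists c; first exact: memX.
  exact: (cover_after hc hl hAc hlt hel heu h' hne).
have hXB : X \subset B par F (apex g).
  apply/subsetP => l; rewrite /X in_setU1 => /orP [/eqP ->|].
    have [a ha] := hF2 _ hg; by rewrite (inB _ _ _ _ ha) hg anc_refl.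
  rewrite in_set => /andP [hl hAl].
  have [hlF _] := Fu_F hl; have [a ha] := hF2 _ hlF.
  rewrite (inB _ _ _ _ ha) hlF /=; exact: anc_trans hgt (Pu_t hAl).1.
have := hmax _ hgt (covers_sub hXB hX) => hd.
have [_ hv] := Fu_F hlam.
have := depth_le hv => hd2.
have := depth_lt hlg hlgn => hd3.
by have := leq_ltn_trans hd2 hd3; rewrite ltnNge hd.
Qed.

End FuS.


Lemma Pl_conv {l : {set V}} {y z : V} : anc (apex l) y -> apex l != y -> anc y z ->
  z \in Pl r par l -> y \in Pl r par l.
Proof. by move=> h1 h2 h3 hz; apply: Pl_intro => //; exact: Vl_conv h1 h3 (Pl_Vl hz). Qed.

Variable U : {set {set V}}.
Hypotheses (hU : forall u, u \in U -> is_uplink par u)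
  (hdisj : forall u1 u2, u1 \in U -> u2 \in U -> u1 != u2 ->
     [disjoint Pl r par u1 & Pl r par u2])
  (hvalid : forall u, u \in U -> valid_Fu r par F u (Fu u)).

Lemma Fu_inst {u : {set V}} : u \in U -> exists v b,
  [/\ apex u != b, anc (apex u) b,
      forall y, (y \in Pl r par u) = [&& anc (apex u) y, anc y b & y != apex u],
      Fu u \subset B par F v &
   [/\ covers r par (Pl r par u) (Fu u),
       forall X : {set {set V}}, X \subset Fu u -> covers r par (Pl r par u) X -> X = Fu u,
       anc v (apex u) &
       forall w : V, anc w (apex u) -> covers r par (Pl r par u) (B par F w) -> depth w <= depth v]].
Proof.
move=> hu; have [t [b [htb htanc ht hb hz]]] := uplink_spec _ (hU _ hu).
have hA : apex u = t by eapply ul_apex; eauto.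
move: (hvalid _ hu) => /existsP [v /andP [hvu /minsetP [/andP [hsub hcov] hmn]]].
move: hvu => /existsP [t' /and4P [htop hvt hcovB /forallP hmx]].
have ht' : t' = t by eapply ul_top; eauto.
subst t'.
exists v, b; rewrite hA; split => //.
  by move=> y; eapply ul_Pl; eauto.
split => //.
  move=> X hX hc; apply: hmn => //; rewrite hc andbT.
  exact: subset_trans hX hsub.
by move=> w h1 h2; have := hmx w; rewrite h1 h2.
Qed.


Ltac inst hu := have [v [b [H1 H2 H3 H4 [H5 H6 H7 H8]]]] := Fu_inst hu.

Local Notation prec := (precu r par Fu).
Local Notation Plr := (Pl r par).


Lemma UPul_ex {u : {set V}} (hu : u \in U) {l : {set V}} : l \in Fu u -> exists e, e \in Pul r par Fu u l.
Proof. by inst hu; eapply Pul_ex; eassumption. Qed.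
Lemma UPul_spec {u : {set V}} (hu : u \in U) {l : {set V}} {e : V} : l \in Fu u -> e \in Pul r par Fu u l ->
  [/\ e \in Plr u, e \in Plr l & forall l', l' \in Fu u -> l' != l -> e \notin Plr l'].
Proof. by inst hu; eapply Pul_spec; eassumption. Qed.
Lemma UFu_F {u : {set V}} (hu : u \in U) {l : {set V}} : l \in Fu u -> l \in F.
Proof. by inst hu => hl; have [] := Fu_F _ _ H4 hl. Qed.
Lemma Uapex_inj {u : {set V}} (hu : u \in U) {c : {set V}} {c' : {set V}} : c \in Fu u -> c' \in Fu u -> apex c = apex c' -> c = c'.
Proof. by move=> *; inst hu; eapply apex_inj; eauto. Qed.
Lemma Uprec_of_anc {u : {set V}} (hu : u \in U) {c : {set V}} {c' : {set V}} : c \in Fu u -> c' \in Fu u -> c != c' ->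
  anc (apex c) (apex c') -> prec u c c'.
Proof. by move=> *; inst hu; eapply prec_of_anc; eauto. Qed.
Lemma Uprec_apex {u : {set V}} (hu : u \in U) {c : {set V}} {c' : {set V}} : c \in Fu u -> c' \in Fu u -> prec u c c' ->
  anc (apex c) (apex c') /\ apex c != apex c'.
Proof. by move=> *; inst hu; eapply prec_apex; eauto. Qed.
Lemma Uprec_total {u : {set V}} (hu : u \in U) {c : {set V}} {c' : {set V}} : c \in Fu u -> c' \in Fu u -> c != c' -> prec u c c' \/ prec u c' c.
Proof. by move=> *; inst hu; eapply prec_total; eauto. Qed.
Lemma Uprec_asym {u : {set V}} (hu : u \in U) {c : {set V}} {c' : {set V}} : c \in Fu u -> c' \in Fu u -> prec u c c' -> prec u c' c -> False.
Proof. by move=> g1 g2 g3 g4; inst hu; exact: (prec_asym _ H6 g1 g2 g3 g4). Qed.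
Lemma Uprec_trans {u : {set V}} (hu : u \in U) {a : {set V}} {c : {set V}} {d : {set V}} : c \in Fu u -> prec u a c -> prec u c d -> prec u a d.
Proof. by move=> g1 g2 g3; inst hu; exact: (prec_trans _ H6 g1 g2 g3). Qed.
Lemma Uno_skip {u : {set V}} (hu : u \in U) {l : {set V}} {m : {set V}} {c : {set V}} : l \in Fu u -> m \in Fu u -> c \in Fu u ->
  prec u l m -> prec u m c -> apex c \in Plr u -> apex c \in Plr l -> False.
Proof. by move=> g1 g2 g3 g4 g5 g6 g7; inst hu; exact: (no_skip _ _ _ H3 H5 H6 g1 g2 g3 g4 g5 g6 g7). Qed.
Lemma Utop_unique {u : {set V}} (hu : u \in U) {c : {set V}} {c' : {set V}} : c \in Fu u -> c' \in Fu u ->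
  anc (apex c) (apex u) -> anc (apex c') (apex u) -> c = c'.
Proof. by move=> g1 g2 g3 g4; inst hu; exact: (top_unique _ _ _ H3 H5 H6 g1 g2 g3 g4). Qed.
Lemma Uarc_head {u : {set V}} (hu : u \in U) {l : {set V}} {l' : {set V}} : l \in Fu u -> l' \in Fu u -> prec u l l' ->
  (forall l3, l3 \in Fu u -> ~~ (prec u l l3 && prec u l3 l')) ->
  apex l' \in Plr u /\ apex l' \in Plr l.
Proof. by move=> g1 g2 g3 g4; inst hu; exact: (arc_head _ _ _ H2 H3 H5 H6 g1 g2 g3 g4). Qed.
Lemma Uvu_contra {u : {set V}} (hu : u \in U) {lam : {set V}} {c : {set V}} {g : {set V}} : lam \in Fu u -> c \in Fu u -> apex c \in Plr u ->
  g \in F -> anc (apex lam) (apex g) -> apex lam != apex g -> anc (apex g) (apex u) ->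
  (forall y, y \in Plr u -> anc y (apex c) -> y \in Plr g) -> False.
Proof. by move=> g1 g2 g3 g4 g5 g6 g7 g8; inst hu; exact: (vu_contra _ _ _ _ H2 H3 H4 H5 H6 H8 g1 g2 g3 g4 g5 g6 g7 g8). Qed.
Lemma UPu_total {u : {set V}} (hu : u \in U) {y : V} {z : V} : y \in Plr u -> z \in Plr u -> anc y z || anc z y.
Proof.
inst hu => hy hz; move: hy hz; rewrite !H3 => /and3P [_ hy _] /and3P [_ hz _].
exact: anc_total hy hz.
Qed.
Lemma Uapex_dich {u : {set V}} (hu : u \in U) {l : {set V}} : l \in Fu u -> (apex l \in Plr u) || anc (apex l) (apex u).
Proof.
inst hu => hl; case E: (apex l \in Plr u) => //=.
by eapply notPu_t; [eassumption | eassumption | eapply apex_b; eassumption | rewrite E].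
Qed.
Lemma UPu_cmp {u : {set V}} (hu : u \in U) {y : V} {z : V} : y \in Plr u -> z \in Plr u -> anc y z || anc z y.
Proof. exact: UPu_total. Qed.
Lemma UFu_cmp {u : {set V}} (hu : u \in U) {l : {set V}} {y : V} : l \in Fu u -> y \in Plr u -> anc (apex l) y || anc y (apex l).
Proof.
inst hu => hl hy; move: hy; rewrite H3 => /and3P [_ hy _].
apply: anc_total _ hy; eapply apex_b; eassumption.
Qed.



Local Notation isarc := (is_arc r par Fu U).

Lemma arcP {a : arcT V} : isarc a -> [/\ a.1.1 \in U, a.1.2 \in Fu a.1.1, a.2 \in Fu a.1.1,
  prec a.1.1 a.1.2 a.2 & forall l3, l3 \in Fu a.1.1 -> ~~ (prec a.1.1 a.1.2 l3 && prec a.1.1 l3 a.2)].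
Proof.
case/andP => hu /and5P [_ h1 h2 h3 /forallP h4]; split => // l3 hl3.
by have := h4 l3; rewrite hl3.
Qed.

Lemma arc_apex {a : arcT V} : isarc a -> [/\ apex a.2 \in Plr a.1.1, apex a.2 \in Plr a.1.2,
  anc (apex a.1.2) (apex a.2) & apex a.1.2 != apex a.2].
Proof.
move=> ha; have [hu h1 h2 h3 h4] := arcP ha.
have [p1 p2] := Uarc_head hu h1 h2 h3 h4.
by have [q1 q2] := Pl_apex p2; split.
Qed.

Lemma arc_F {a : arcT V} : isarc a -> a.1.2 \in F /\ a.2 \in F.
Proof. by move=> ha; have [hu h1 h2 _ _] := arcP ha; split; [exact: (UFu_F hu h1) | exact: (UFu_F hu h2)]. Qed.

Lemma disj_eq {u1 u2 : {set V}} {y : V} : u1 \in U -> u2 \in U -> y \in Plr u1 -> y \in Plr u2 -> u1 = u2.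
Proof.
move=> h1 h2 y1 y2; apply/eqP/negPn/negP => hne.
by have := disjointFr (hdisj _ _ h1 h2 hne) y1; rewrite y2.
Qed.

Lemma indeg {a a' : arcT V} : isarc a -> isarc a' -> a.2 = a'.2 -> a.1.2 = a'.1.2.
Proof.
move=> ha ha' E.
have [hu h1 h2 h3 h4] := arcP ha; have [hu' h1' h2' h3' h4'] := arcP ha'.
have [q1 _ _ _] := arc_apex ha; have [q1' _ _ _] := arc_apex ha'.
rewrite -E in q1'; have Eu := disj_eq hu hu' q1 q1'.
rewrite -Eu -E in h1' h2' h3' h4'.
apply/eqP/negPn/negP => hne.
case: (Uprec_total hu h1 h1' hne) => p.
  by have := h4 _ h1'; rewrite p h3'.
by have := h4' _ h1; rewrite p h3.
Qed.

Definition inarc (y : {set V}) : option (arcT V) := [pick a | isarc a && (a.2 == y)].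
Definition parA (y : {set V}) : {set V} := if inarc y is Some a then a.1.2 else y.

Lemma parA_arc {y : {set V}} : parA y != y -> exists a : arcT V, [/\ isarc a, a.2 = y & a.1.2 = parA y].
Proof.
rewrite /parA /inarc; case: pickP => [a /andP [ha /eqP h2] _|_]; [by exists a | by rewrite eqxx].
Qed.

Lemma parA_of {a : arcT V} : isarc a -> parA a.2 = a.1.2.
Proof.
move=> ha; rewrite /parA /inarc; case: pickP => [a' /andP [ha' /eqP h2]|h].
  exact: indeg ha' ha h2.
by have := h a; rewrite ha eqxx.
Qed.

Lemma parA_apex (y : {set V}) : anc (apex (parA y)) (apex y).
Proof.
case: (eqVneq (parA y) y) => [->|hne]; first exact: anc_refl.
have [a [ha <- <-]] := parA_arc hne; by have [_ _ ] := arc_apex ha.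
Qed.

Lemma parA_apex_ne {y : {set V}} : parA y != y -> apex (parA y) != apex y.
Proof. by move=> hne; have [a [ha <- <-]] := parA_arc hne; have [] := arc_apex ha. Qed.

Lemma iter_apex (y : {set V}) n m : m <= n -> anc (apex (iter n parA y)) (apex (iter m parA y)).
Proof.
move=> hmn; rewrite -(subnK hmn); elim: (n - m) => [|d IH]; first exact: anc_refl.
by rewrite addSn iterS; exact: anc_trans (parA_apex _) IH.
Qed.

Lemma stable_from {y : {set V}} {k m : nat} : parA (iter k parA y) = iter k parA y -> k <= m ->
  iter m parA y = iter k parA y.
Proof.
move=> h hkm; rewrite -(subnK hkm); elim: (m - k) => [|d IH] //.
by rewrite addSn iterS IH h.
Qed.

Lemma depth_pos (x : V) : 0 < depth x.
Proof. by apply/card_gt0P; exists x; rewrite inE anc_refl. Qed.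

Lemma depth_max (x : V) : depth x <= #|V|.
Proof. exact: max_card. Qed.

Lemma stab (y : {set V}) : parA (iter #|V| parA y) = iter #|V| parA y.
Proof.
have Q : forall n, (parA (iter n parA y) = iter n parA y) \/ depth (apex (iter n parA y)) + n <= depth (apex y).
  elim=> [|n [IH|IH]]; first by right; rewrite addn0.
    by left; rewrite iterS IH IH.
  case: (eqVneq (parA (iter n parA y)) (iter n parA y)) => [E|hne].
    by left; rewrite iterS E E.
  right; rewrite iterS.
  have := depth_lt (parA_apex (iter n parA y)) (parA_apex_ne hne) => hlt.
  lia.
case: (Q #|V|) => // h.
have := depth_pos (apex (iter #|V| parA y)); have := depth_max (apex y); lia.
Qed.

Definition root (y : {set V}) := iter #|V| parA y.

Lemma root_par (y : {set V}) : root (parA y) = root y.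
Proof. by rewrite /root -iterSr iterS stab. Qed.


Local Notation adjA := (adj r par Fu U).

Lemma adj_arc {l1 l2 : {set V}} : adjA l1 l2 -> exists a : arcT V,
  isarc a /\ ((a.1.2 = l1 /\ a.2 = l2) \/ (a.1.2 = l2 /\ a.2 = l1)).
Proof.
case/existsP => a /andP [ha /orP [/andP [/eqP h1 /eqP h2]|/andP [/eqP h1 /eqP h2]]].
  by exists a; split => //; left.
by exists a; split => //; right.
Qed.

Lemma adj_root {l1 l2 : {set V}} : adjA l1 l2 -> root l1 = root l2.
Proof.
case/adj_arc => a [ha [[<- <-]|[<- <-]]].
  by rewrite -(root_par a.2) (parA_of ha).
by rewrite -(root_par a.2) (parA_of ha).
Qed.

Lemma connect_root {l0 l : {set V}} : connect adjA l0 l -> root l = root l0.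
Proof.
case/connectP => p hp ->; elim: p l0 hp => //= y p IH l0 /andP [h1 h2].
by rewrite IH // (adj_root h1).
Qed.

Lemma adj_F {l1 l2 : {set V}} : adjA l1 l2 -> l2 \in F.
Proof. by case/adj_arc => a [ha [[_ <-]|[<- _]]]; have [] := arc_F ha. Qed.

Lemma connect_F {l0 l : {set V}} : l0 \in F -> connect adjA l0 l -> l \in F.
Proof.
move=> h0 /connectP [p hp ->]; elim: p l0 h0 hp => //= y p IH l0 h0 /andP [h1 h2].
exact: IH (adj_F h1) h2.
Qed.

Lemma connect_parA {l0 l : {set V}} : connect adjA l0 l -> connect adjA l0 (parA l).
Proof.
move=> h; case: (eqVneq (parA l) l) => [->//|hne].
have [a [ha e1 e2]] := parA_arc hne.
apply: connect_trans h (connect1 _); apply/existsP; exists a; rewrite ha /=.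
by rewrite e1 e2 !eqxx orbT.
Qed.

Lemma connect_iter {l0 l : {set V}} n : connect adjA l0 l -> connect adjA l0 (iter n parA l).
Proof. by move=> h; elim: n => //= n IH; exact: connect_parA IH. Qed.

Lemma branch1 (lam c1 c2 l : {set V}) (i : nat) (x : V) :
  parA c1 = lam -> c1 != lam -> parA c2 = lam -> c2 != lam -> c1 != c2 ->
  iter i parA l = c1 -> (forall k, k <= i -> parA (iter k parA l) != iter k parA l) ->
  x \in Vl par l -> anc (apex c2) x -> anc (apex c1) (apex c2) -> apex c1 != apex c2 -> False.
Proof.
move=> hp1 hn1 hp2 hn2 h12 hi hreal hx hc2x h12a h12n.
have hn1' : parA c1 != c1 by rewrite hp1 eq_sym.
have hn2' : parA c2 != c2 by rewrite hp2 eq_sym.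
have [a1 [ha1 e1 t1]] := parA_arc hn1'.
have [a2 [ha2 e2 t2]] := parA_arc hn2'.
rewrite hp1 in t1; rewrite hp2 in t2.
have [hu1 hl1 hc1 hpr1 him1] := arcP ha1.
have [hu2 hl2 hc2 hpr2 him2] := arcP ha2.
have [r1 r2 r3 r4] := arc_apex ha1.
have [q1 q2 q3 q4] := arc_apex ha2.
rewrite e1 t1 in hl1 hc1 hpr1 him1 r1 r2 r3 r4.
rewrite e2 t2 in hl2 hc2 hpr2 him2 q1 q2 q3 q4.
move: hu1 hl1 hc1 hpr1 him1 r1; set u1 := a1.1.1 => hu1 hl1 hc1 hpr1 him1 r1.
move: hu2 hl2 hc2 hpr2 him2 q1; set u2 := a2.1.1 => hu2 hl2 hc2 hpr2 him2 q1.
have hc1t : anc (apex c1) (apex u2).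
  case: (eqVneq u1 u2) => Eu.
    exfalso; rewrite Eu in hc1 hpr1.
    have p12 := Uprec_of_anc hu2 hc1 hc2 h12 h12a.
    by have := him2 c1 hc1; rewrite hpr1 p12.
  have hnot : apex c1 \notin Plr u2.
    by apply/negP => h; move: Eu; rewrite (disj_eq hu1 hu2 r1 h) eqxx.
  have [hu2a hu2n] := Pl_apex q1.
  case/orP: (anc_total h12a hu2a) => // h.
  case: (eqVneq (apex u2) (apex c1)) => [->|E]; first exact: anc_refl.
  by move: hnot; rewrite (Pl_conv h E h12a q1).
pose P := fun k => (k <= i) && anc (apex (iter k parA l)) (apex u2).
have exP : exists k, P k by exists i; rewrite /P leqnn hi hc1t.
case: (ex_minnP exP) => k /andP [hki hkt] hmink.
have [g eg] : exists g, g = iter k parA l by eexists.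
rewrite -eg in hkt.
have hgF : g \in F.
  have [a [ha ea _]] := parA_arc (hreal k hki).
  by have [_] := arc_F ha; rewrite ea eg.
have hcg : anc (apex c1) (apex g) by rewrite -hi eg; exact: iter_apex.
have hlg : anc (apex lam) (apex g) := anc_trans r3 hcg.
have hlgn : apex lam != apex g.
  apply/eqP => E; have h' : anc (apex g) (apex c1) by rewrite -E.
  by move: r4; rewrite (anc_antisym hcg h') E eqxx.
have hlx : anc (apex l) x := Vl_apex hx.
have hu2x : anc (apex u2) x := anc_trans (Pl_apex q1).1 hc2x.
apply: (Uvu_contra hu2 hl2 hc2 q1 hgF hlg hlgn hkt) => y hy hyc.
have [hay hany] := Pl_apex hy.
have hgy : anc (apex g) y := anc_trans hkt hay.
have hgny : apex g != y.
  apply/eqP => E; rewrite E in hkt.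
  by move: hany; rewrite (anc_antisym hkt hay) eqxx.
have hyx : anc y x := anc_trans hyc hc2x.
move: eg hmink hki; case: k => [|k'] eg hmink hki.
  rewrite eg /= in hgy hgny *; exact: Pl_intro (Vl_conv hgy hyx hx) hgny.
have hk' : k' <= i by apply: leq_trans hki.
have [a [ha ea ta]] := parA_arc (hreal k' hk').
rewrite -iterS -eg in ta.
have [s1 s2 _ _] := arc_apex ha.
rewrite ea ta in s1 s2.
set z := apex (iter k' parA l) in s1 s2.
have hzx : anc z x.
  apply: anc_trans (Vl_apex hx); exact: (iter_apex l k' 0 (leq0n k')).
have hnz : ~~ anc z (apex u2).
  apply/negP => h; have : P k' by rewrite /P hk' h.
  by move/hmink; rewrite ltnn.
have hu2z : anc (apex u2) z by case/orP: (anc_total hu2x hzx) => // h; rewrite h in hnz.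
have hu2zn : apex u2 != z by apply/eqP => E; rewrite -E anc_refl in hnz.
case: (boolP (anc (apex c2) z)) => hc2z.
  exact: Pl_conv hgy hgny (anc_trans hyc hc2z) s2.
exfalso.
have hzc2 : anc z (apex c2) by case/orP: (anc_total hzx hc2x) => // h; rewrite h in hc2z.
have hzc2n : z != apex c2 by apply/eqP => E; rewrite E anc_refl in hc2z.
have hzu2 : z \in Plr u2 := Pl_conv hu2z hu2zn hzc2 q1.
have [hua hla _ _ _] := arcP ha.
have Eu := disj_eq hua hu2 s1 hzu2.
rewrite Eu ta in hla.
have := Utop_unique hu2 hla hl2 hkt (anc_trans hlg hkt) => Eg.
by move: hlgn; rewrite Eg eqxx.
Qed.


Lemma same_apex {c1 c2 : {set V}} : parA c1 != c1 -> parA c2 != c2 -> apex c1 = apex c2 -> c1 = c2.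
Proof.
move=> h1 h2 E.
have [a1 [ha1 e1 _]] := parA_arc h1; have [a2 [ha2 e2 _]] := parA_arc h2.
have [hu1 _ hc1 _ _] := arcP ha1; have [hu2 _ hc2 _ _] := arcP ha2.
have [r1 _ _ _] := arc_apex ha1; have [q1 _ _ _] := arc_apex ha2.
rewrite e1 in hc1 r1; rewrite e2 in hc2 q1.
rewrite E in r1; have Eu := disj_eq hu1 hu2 r1 q1.
rewrite Eu in hc1; exact: (Uapex_inj hu2 hc1 hc2 E).
Qed.

Lemma real_before {y : {set V}} {i : nat} : parA (iter i parA y) != iter i parA y ->
  forall k, k <= i -> parA (iter k parA y) != iter k parA y.
Proof.
move=> h k hk; apply/eqP => E; move: h.
by rewrite -iterS (stable_from E hk) (stable_from E (leqW hk)) eqxx.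
Qed.

Lemma comparable (l0 l m : {set V}) (x : V) :
  connect adjA l0 l -> connect adjA l0 m -> x \in Vl par l -> x \in Vl par m ->
  depth (apex l) <= depth (apex m) -> exists2 n, n <= #|V| & iter n parA m = l.
Proof.
move=> cl cm hxl hxm hdm.
pose Ast := fun z => [exists j : 'I_#|V|.+1, iter j parA m == z].
have AstP : forall z, Ast z -> exists2 j, j <= #|V| & iter j parA m = z.
  by move=> z /existsP [j /eqP hj]; exists j => //; rewrite -ltnS.
have AstI : forall j, j <= #|V| -> Ast (iter j parA m).
  by move=> j hj; apply/existsP; exists (Ordinal (hj : j < #|V|.+1)).
have exQ : exists i, Ast (iter i parA l).
  exists #|V|; have E : root l = root m by rewrite (connect_root cl) (connect_root cm).
  rewrite /root in E; rewrite E; exact: AstI.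
case: (ex_minnP exQ) => i hQi hmin.
case: i hQi hmin => [|i'] hQi hmin; first exact: AstP.
exfalso.
set lam := iter i'.+1 parA l in hQi.
have hc1A : ~~ Ast (iter i' parA l) by apply/negP => /hmin; rewrite ltnn.
have hp1 : parA (iter i' parA l) = lam by rewrite /lam iterS.
have hn1 : iter i' parA l != lam by apply/eqP => E; move: hc1A; rewrite E hQi.
have hr1 : parA (iter i' parA l) != iter i' parA l by rewrite hp1 eq_sym.
have [j0 hj0 hj0e] := AstP _ hQi.
have exJ : exists j, iter j parA m == lam by exists j0; rewrite hj0e.
case: (ex_minnP exJ) => j /eqP hj hminj.
have hjle : j <= #|V| by apply: leq_trans (hminj j0 _) hj0; rewrite hj0e.
case: j hj hminj hjle => [|j'] hj hminj hjle.
  rewrite /= in hj.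
  have := depth_lt (parA_apex _) (parA_apex_ne hr1); rewrite hp1 -hj => h1.
  have := depth_le (iter_apex l i' 0 (leq0n i')); rewrite /= => h2.
  by have := leq_trans h1 h2; rewrite ltnNge hdm.
have hp2 : parA (iter j' parA m) = lam by rewrite -iterS.
have hn2 : iter j' parA m != lam by apply/eqP => E; have := hminj j' (introT eqP E); rewrite ltnn.
have hr2 : parA (iter j' parA m) != iter j' parA m by rewrite hp2 eq_sym.
have h12 : iter i' parA l != iter j' parA m.
  apply/eqP => E; move: hc1A; rewrite E AstI //; exact: ltnW.
have hc1x : anc (apex (iter i' parA l)) x := anc_trans (iter_apex l i' 0 (leq0n i')) (Vl_apex hxl).
have hc2x : anc (apex (iter j' parA m)) x := anc_trans (iter_apex m j' 0 (leq0n j')) (Vl_apex hxm).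
case: (eqVneq (apex (iter i' parA l)) (apex (iter j' parA m))) => Ea.
  by move: h12; rewrite (same_apex hr1 hr2 Ea) eqxx.
case/orP: (anc_total hc1x hc2x) => ha.
  exact: (branch1 _ _ _ _ _ _ hp1 hn1 hp2 hn2 h12 (erefl _) (real_before hr1) hxl hc2x ha Ea).
have h21 : iter j' parA m != iter i' parA l by rewrite eq_sym.
have Ea' : apex (iter j' parA m) != apex (iter i' parA l) by rewrite eq_sym.
exact: (branch1 _ _ _ _ _ _ hp2 hn2 hp1 hn1 h21 (erefl _) (real_before hr2) hxm hc1x ha Ea').
Qed.


Fixpoint pth (n : nat) (y : {set V}) : seq (arcT V) :=
  if n is n'.+1 then (if inarc y is Some a then rcons (pth n' a.1.2) a else [::]) else [::].

Lemma inarc_spec {y : {set V}} {a : arcT V} : inarc y = Some a -> [/\ isarc a, a.2 = y & parA y = a.1.2].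
Proof.
move=> E; rewrite /parA E; move: E; rewrite /inarc; case: pickP => // a' /andP [ha /eqP h] [<-].
by split.
Qed.

Lemma inarc_none {y : {set V}} : inarc y = None -> parA y = y.
Proof. by rewrite /parA => ->. Qed.

Lemma pth_mem {n : nat} {y : {set V}} {a : arcT V} : a \in pth n y ->
  isarc a /\ exists k, a.2 = iter k parA y /\ a.1.2 = iter k.+1 parA y.
Proof.
elim: n y => [|n IH] y //=; case E: (inarc y) => [a'|] //.
have [ha' e2 ep] := inarc_spec E.
rewrite mem_rcons in_cons => /orP [/eqP ->|hin].
  by split => //; exists 0; rewrite /= ep e2.
have [ha [k [k1 k2]]] := IH _ hin; split => //; exists k.+1.
by rewrite k1 k2 -iterS !iterSr ep.
Qed.

Lemma pth_last n (y : {set V}) (b : arcT V) : pth n y != [::] -> (last b (pth n y)).2 = y.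
Proof.
case: n => [|n] //=; case E: (inarc y) => [a|] // _.
by rewrite last_rcons; have [] := inarc_spec E.
Qed.

Lemma pth_sorted n (y : {set V}) : sorted (fun a b : arcT V => a.2 == b.1.2) (pth n y).
Proof.
elim: n y => [|n IH] y //=; case E: (inarc y) => [a|] //.
have := IH a.1.2; case E2: (pth n a.1.2) => [|b s] //= hs.
rewrite rcons_path hs /=.
have := pth_last n a.1.2 b; rewrite E2 /= => ->; last by [].
by rewrite eqxx.
Qed.

Lemma pv_mem n (y w : {set V}) : w \in path_vertices (pth n y) -> exists k, w = iter k parA y.
Proof.
case: n => [|n] //=; case E: (inarc y) => [a|] //.
have [ha e2 ep] := inarc_spec E.
have gen : forall (s : seq (arcT V)) (a0 : arcT V), (forall a1, a1 \in s -> exists k, a1.2 = iter k parA y /\ a1.1.2 = iter k.+1 parA y) ->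
  (a0 \in s) -> w \in path_vertices s -> exists k, w = iter k parA y.
  move=> s a0 hs _; case: s hs => [|b s'] hs //.
  move=> hw; have : w \in b.1.2 :: map snd (b :: s') by [].
  rewrite in_cons => /orP [/eqP ->|/mapP [a1 h1 ->]].
    by have [k [_ ->]] := hs b (mem_head _ _); exists k.+1.
  by have [k [-> _]] := hs a1 h1; exists k.
apply: (gen _ a) => [a1|]; last by rewrite mem_rcons mem_head.
rewrite mem_rcons in_cons => /orP [/eqP ->|hin]; first by exists 0; rewrite /= ep e2.
have [_ [k [k1 k2]]] := pth_mem hin; exists k.+1; rewrite k1 k2; split; by rewrite [RHS]iterSr ep.
Qed.

Lemma pth_uniq n (y : {set V}) : uniq (path_vertices (pth n y)).
Proof.
elim: n y => [|n IH] y //=; case E: (inarc y) => [a|] //.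
have [ha e2 ep] := inarc_spec E.
have [_ _ hA hAn] := arc_apex ha.
have hne : a.1.2 != a.2 by apply/eqP => E'; rewrite E' eqxx in hAn.
have hIH := IH a.1.2.
have hnot : a.2 \notin path_vertices (pth n a.1.2).
  apply/negP => /pv_mem [k hk].
  have h1 := iter_apex a.1.2 k 0 (leq0n k); rewrite /= -hk in h1.
  by move: hAn; rewrite (anc_antisym hA h1) eqxx.
case E2: (pth n a.1.2) hIH hnot => [|b s] hIH hnot.
  by rewrite /= inE hne.
have -> : path_vertices (rcons (b :: s) a) = rcons (path_vertices (b :: s)) a.2 by rewrite /= map_rcons.
by rewrite rcons_uniq hnot hIH.
Qed.

Lemma pth_tail n (y : {set V}) k : k < n -> parA (iter k parA y) != iter k parA y ->
  exists2 a, a \in pth n y & a.1.2 = iter k.+1 parA y.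
Proof.
elim: n y k => [|n IH] y k //= hk.
case E: (inarc y) => [a|].
  have [ha e2 ep] := inarc_spec E.
  case: k hk => [|k'] hk hr.
    by exists a; [rewrite mem_rcons mem_head | rewrite /= ep].
  rewrite iterSr ep in hr.
  have [a1 h1 h2] := IH a.1.2 k' hk hr.
  by exists a1; [rewrite mem_rcons in_cons h1 orbT | rewrite iterSr ep].
have hy := inarc_none E.
by rewrite (@stable_from y 0 k) //= hy eqxx.
Qed.


Lemma inj_core (a1 a2 : arcT V) (x : V) : isarc a1 -> isarc a2 -> a1.1.1 = a2.1.1 ->
  x \in Vl par a1.1.2 -> anc (apex a1.1.2) (apex a2.1.2) -> anc (apex a2.2) x ->
  a1.1.2 = a2.1.2.
Proof.
move=> ha1 ha2 Eu hx1 hA hcx; apply/eqP/negPn/negP => hne.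
have [hu1 hl1 _ _ _] := arcP ha1.
have [hu hl2 hc p2c _] := arcP ha2.
rewrite Eu in hl1.
have [q1 q2 q3 q4] := arc_apex ha2.
have p12 := Uprec_of_anc hu hl1 hl2 hne hA.
have hA1c : anc (apex a1.1.2) (apex a2.2) := anc_trans hA q3.
have hA1cn : apex a1.1.2 != apex a2.2.
  apply/eqP => E; have h' : anc (apex a2.2) (apex a2.1.2) by rewrite -E.
  by move: q4; rewrite (anc_antisym q3 h') eqxx.
have hcl1 : apex a2.2 \in Plr a1.1.2 := Pl_intro (Vl_conv hA1c hcx hx1) hA1cn.
exact: (Uno_skip hu hl1 hl2 hc p12 p2c q1 hcl1).
Qed.

Lemma main_count (l0 : {set V}) (C : {set {set V}}) (k : nat) (x : V) :
  l0 \in F -> C = [set l | connect adjA l0 l] ->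
  (forall s, dpath_in r par Fu U C s -> #|[set u in U | has (fun a : arcT V => a.1.1 == u) s]| <= k) ->
  #|[set l in C | x \in Vl par l]| <= k.+1.
Proof.
move=> hl0 hC hyp.
set S := [set l in C | x \in Vl par l].
case: (eqVneq S set0) => [->|/set0Pn [l1 hl1]]; first by rewrite cards0.
case: (arg_maxnP (fun l => depth (apex l)) hl1) => m hmS hmax.
have hSP : forall l, l \in S -> connect adjA l0 l /\ x \in Vl par l.
  by move=> l; rewrite !inE hC inE => /andP [].
have [hmC hmx] := hSP m hmS.
pose s := pth #|V|.+1 m.
have hdp : dpath_in r par Fu U C s.
  apply/and3P; split; [|exact: pth_sorted|exact: pth_uniq].
  apply/allP => a ha; have [harc [j [j1 j2]]] := pth_mem ha.
  by rewrite harc hC !inE j1 j2 !connect_iter.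
have hk := hyp s hdp.
have hsx : forall a, a \in s -> anc (apex a.2) x.
  move=> a ha; have [_ [j [j1 _]]] := pth_mem ha; rewrite j1.
  exact: anc_trans (iter_apex m j 0 (leq0n j)) (Vl_apex hmx).
have tails : forall l, l \in S :\ m -> exists2 a, a \in s & a.1.2 = l.
  move=> l; rewrite in_setD1 => /andP [hlm hlS].
  have [hlC hlx] := hSP l hlS.
  have [n hn hnl] := comparable _ _ _ _ hlC hmC hlx hmx (hmax l hlS).
  have exN : exists n, iter n parA m == l by exists n; rewrite hnl.
  case: (ex_minnP exN) => n0 /eqP hn0 hmin0.
  have hn0n : n0 <= n by apply: hmin0; rewrite hnl.
  case: n0 hn0 hmin0 hn0n => [|n'] hn0 hmin0 hn0n; first by move: hlm; rewrite -hn0 eqxx.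
  have hr : parA (iter n' parA m) != iter n' parA m.
    apply/eqP => E; have : iter n' parA m == l by rewrite -hn0 iterS E.
    by move/hmin0; rewrite ltnn.
  have hlt : n' < #|V|.+1 by rewrite ltnS; apply: leq_trans hn; exact: ltnW.
  have [a ha hat] := pth_tail _ _ _ hlt hr.
  by exists a => //; rewrite hat hn0.
pose f := fun l : {set V} => if [pick a | (a \in s) && (a.1.2 == l)] is Some a then a.1.1 else set0.
have fP : forall l, l \in S :\ m -> exists a, [/\ a \in s, a.1.2 = l & f l = a.1.1].
  move=> l hl; rewrite /f; case: pickP => [a /andP [ha /eqP hal]|hn].
    by exists a.
  have [a ha hal] := tails l hl; by have := hn a; rewrite ha hal eqxx.
have hinj : {in S :\ m &, injective f}.
  move=> l l' hl hl' hf.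
  have [a [ha hal hfa]] := fP l hl; have [a' [ha' hal' hfa']] := fP l' hl'.
  have [harc _] := pth_mem ha; have [harc' _] := pth_mem ha'.
  have Eu : a.1.1 = a'.1.1 by rewrite -hfa -hfa'.
  have hlS : l \in S by move: hl; rewrite in_setD1 => /andP [].
  have hl'S : l' \in S by move: hl'; rewrite in_setD1 => /andP [].
  have [_ hlx] := hSP l hlS; have [_ hl'x] := hSP l' hl'S.
  rewrite -hal -hal' in hlx hl'x *.
  case/orP: (anc_total (Vl_apex hlx) (Vl_apex hl'x)) => hA.
    exact: (inj_core _ _ _ harc harc' Eu hlx hA (hsx a' ha')).
  exact: esym (inj_core _ _ _ harc' harc (esym Eu) hl'x hA (hsx a ha)).
have hsub : f @: (S :\ m) \subset [set u in U | has (fun a : arcT V => a.1.1 == u) s].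
  apply/subsetP => u /imsetP [l hl ->].
  have [a [ha hal hfa]] := fP l hl.
  have [harc _] := pth_mem ha; have [hu _ _ _ _] := arcP harc.
  rewrite hfa inE hu /=; apply/hasP; exists a => //.
have := subset_leq_card hsub; rewrite card_in_imset // => h.
have hmS' : m \in S := hmS.
rewrite (cardsD1 m S) hmS' add1n ltnS.
exact: leq_trans h hk.
Qed.

End Tree.

Theorem lemma14 (V : finType) (r : V) (par : V -> V)
  (L : {set {set V}}) (w : {set V} -> rat) (F : {set {set V}})
  (Fu : {set V} -> {set {set V}}) (U : {set {set V}})
  (C : {set {set V}}) (k : nat) :
  (* G is a spanning tree rooted at r, given by parent pointers *)
  par r = r ->
  (forall v : V, exists n, iter n par v = r) ->
  (* WTAP instance *)
  (forall l, l \in L -> #|l| = 2) ->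
  (forall l, l \in L -> (0 < w l)%R) ->
  (* F is a WTAP solution: F \subset L and covers every edge *)
  F \subset L ->
  (forall x : V, x != r -> exists2 l, l \in F & x \in Pl r par l) ->
  (* U is a set of up-links with pairwise disjoint P_u *)
  (forall u, u \in U -> (u \in L) && is_uplink par u) ->
  (forall u1 u2, u1 \in U -> u2 \in U -> u1 != u2 ->
     [disjoint Pl r par u1 & Pl r par u2]) ->
  (* the fixed choices of F_u *)
  (forall u, u \in U -> valid_Fu r par F u (Fu u)) ->
  (* C is a weakly connected component of the dependency graph of U *)
  is_wcomp r par F Fu U C ->
  (* path condition *)
  (forall s, dpath_in r par Fu U C s ->
     #|[set u in U | has (fun a : arcT V => a.1.1 == u) s]| <= k) ->
  thin par k.+1 C.

Proof.
move=> hpr hreach hL2 hw hFL hcovF hUL hdisj hvalid hwc hpath.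
have hF2 : forall l, l \in F -> exists a, a \in l.
  move=> l hl; have := hL2 l (subsetP hFL l hl) => hc.
  by apply/card_gt0P; rewrite hc.
have hU : forall u, u \in U -> is_uplink par u by move=> u /hUL /andP [].
case/existsP: hwc => l0 /andP [hl0 /eqP hC].
apply/forallP => x.
exact: (main_count _ _ _ hpr hreach _ _ hF2 _ hU hdisj hvalid _ _ _ _ hl0 hC hpath).
Qed.
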